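(* Let $A,B$ be an LR pair on $V$ with parameter sequence $(\varphi_i)_{i=1}^d$ and let $E_i$ ($0\le i\le d$) be the projection onto the $i$-th component of the $(A,B)$-decomposition. Define $$\Psi=\sum_{i=0}^d\frac{\varphi_1\varphi_2\cdots\varphi_i}{\varphi_d\varphi_{d-1}\cdots\varphi_{d-i+1}}E_i .$$ Then $\Psi$ is invertible, each of $A,\Psi^{-1}B\Psi$ and $\Psi A\Psi^{-1},B$ is an LR pair on $V$, and the three LR pairs $$A,\ \Psi^{-1}B\Psi\qquad\qquad B,\ A\qquad\qquad \Psi A\Psi^{-1},\ B$$ are mutually isomorphic.
   Context: Let $V$ be a vector space over a field $\mathbb F$ with $\dim V=d+1$. A decomposition of $V$ is a sequence $(V_i)_{i=0}^d$ of one-dimensional subspaces with $V=\bigoplus_{i=0}^d V_i$. An element $X\in\mathrm{End}(V)$ lowers the decomposition if $XV_i=V_{i-1}$ for $1\le i\le d$ and $XV_0=0$; it raises it if $XV_i=V_{i+1}$ for $0\le i\le d-1$ and $XV_d=0$. An ordered pair $A,B\in\mathrm{End}(V)$ is an LR pair on $V$ if some decomposition of $V$ is lowered by $A$ and raised by $B$; it is unique, the $(A,B)$-decomposition $(V_i)$. The projection $E_i$ maps $V_i$ identically and kills $V_j$ for $j\ne i$. For $1\le i\le d$, $V_i$ is invariant under $BA$ with nonzero eigenvalue $\varphi_i$ (the parameter sequence). LR pairs $A,B$ and $A',B'$ on $V$ are isomorphic if there is an invertible $\sigma\in\mathrm{End}(V)$ with $\sigma A=A'\sigma$, $\sigma B=B'\sigma$.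 *)

(* Defs.v *)
From HB Require Import structures.
From mathcomp Require Import all_boot all_order all_algebra.
Set Implicit Arguments. Unset Strict Implicit. Unset Printing Implicit Defensive.
Import GRing.Theory.
Local Open Scope ring_scope.

Section LR.
Variables (F : fieldType) (V : vectType F) (d : nat).

Definition decomposition (Vs : nat -> {vspace V}) : Prop :=
  [/\ forall i, (i <= d)%N -> \dim (Vs i) = 1%N,
      directv (\sum_(i < d.+1) Vs i)%VS
    & (\sum_(i < d.+1) Vs i)%VS = fullv].

Definition lowers (X : 'End(V)) (Vs : nat -> {vspace V}) : Prop :=
  (forall i, (1 <= i <= d)%N -> (X @: Vs i)%VS = Vs i.-1) /\ (X @: Vs 0%N)%VS = 0%VS.

Definition raises (X : 'End(V)) (Vs : nat -> {vspace V}) : Prop :=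
  (forall i, (i < d)%N -> (X @: Vs i)%VS = Vs i.+1) /\ (X @: Vs d)%VS = 0%VS.

Definition LR_pair (A B : 'End(V)) : Prop :=
  exists Vs, [/\ decomposition Vs, lowers A Vs & raises B Vs].

Definition is_projection (Vs : nat -> {vspace V}) (i : nat) (Ei : 'End(V)) : Prop :=
  (forall v, v \in Vs i -> Ei v = v) /\
  (forall j, (j <= d)%N -> j != i -> forall v, v \in Vs j -> Ei v = 0).

Definition invertible (f : 'End(V)) : Prop :=
  exists g : 'End(V), (g \o f = \1)%VF /\ (f \o g = \1)%VF.

Definition LR_iso (A B A' B' : 'End(V)) : Prop :=
  exists sigma : 'End(V), [/\ invertible sigma,
    (sigma \o A = A' \o sigma)%VF & (sigma \o B = B' \o sigma)%VF].

End LR.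

(* Main.v *)
Require Import Defs.
From HB Require Import structures.
From mathcomp Require Import all_boot all_order all_algebra.
From mathcomp Require Import ring zify.
Import GRing.Theory.
Local Open Scope ring_scope.

Section H.
Variables (F : fieldType) (V : vectType F) (d : nat).
Variables (A B : 'End(V)) (Vs : nat -> {vspace V}).
Hypotheses (hdec : decomposition d Vs) (hlow : lowers d A Vs) (hrai : raises d B Vs).
Variable phi : nat -> F.
Hypothesis hphi : forall i, (1 <= i <= d)%N -> forall v, v \in Vs i -> B (A v) = phi i *: v.

Lemma decompP v : exists2 vs : 'I_d.+1 -> V, (forall i : 'I_d.+1, vs i \in Vs i) & v = \sum_(i < d.+1) vs i.
Proof.
case: hdec => _ _ hf.
have : v \in (\sum_(i < d.+1) Vs i)%VS by rewrite hf memvf.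
move/memv_sumP => [vs H ev]; exists vs => // i; exact: H.
Qed.

Lemma lfun_eq_on (f g : 'End(V)) :
  (forall j, (j <= d)%N -> forall v, v \in Vs j -> f v = g v) -> f = g.
Proof.
move=> H; apply/lfunP => v; case: (decompP v) => vs Hv ->.
rewrite !linear_sum; apply: eq_bigr => i _; exact: (H i (ltn_ord i) _ (Hv i)).

Qed.

Lemma inj_lker (f : 'End(V)) : (forall v, f v = 0 -> v = 0) -> lker f == 0%VS.
Proof.
move=> H; apply/lker0P => x y e; apply/eqP; rewrite -subr_eq0; apply/eqP.
by apply: H; rewrite linearB /= e subrr.
Qed.

Lemma scalar_inj (f : 'End(V)) :
  (forall i, (i <= d)%N -> exists2 c : F, c != 0 & forall v, v \in Vs i -> f v = c *: v) ->
  forall v, f v = 0 -> v = 0.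
Proof.
move=> H v fv0; case: (decompP v) => vs Hv ev.
case: hdec => _ hdir _.
have H2 : forall i : 'I_d.+1, f (vs i) = 0.
  move/directv_sum_independent: hdir => /(_ (fun i => f (vs i))) K.
  move=> i; apply: K => //.
  - move=> j _; have [c _ ->] := H j (ltn_ord j); [ | exact: Hv].
    by apply: memvZ; exact: Hv.
  - by rewrite -linear_sum -ev.
rewrite ev big1 // => i _.
have [c c0 Hc] := H i (ltn_ord i).
move: (H2 i); rewrite Hc //; move/eqP; rewrite scaler_eq0 (negbTE c0) /=.
by move/eqP.
Qed.


Lemma inv_of_lker (f : 'End(V)) : lker f == 0%VS -> invertible f.
Proof. by move=> k; exists (f^-1)%VF; split; [exact: lker0_compVf | exact: lker0_compfV]. Qed.

Lemma scal_img (f : 'End(V)) (U : {vspace V}) c : c != 0 ->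
  (forall v, v \in U -> f v = c *: v) -> (f @: U)%VS = U.
Proof.
move=> c0 Hf; apply/eqP; rewrite eqEsubv; apply/andP; split.
  by apply/subvP => w /memv_imgP [u Hu ->]; rewrite Hf // memvZ.
apply/subvP => u Hu.
have -> : u = f (c^-1 *: u) by rewrite Hf ?memvZ // scalerA mulfV // scale1r.
by apply: memv_img; rewrite memvZ.
Qed.

Lemma scal_inv (f : 'End(V)) (U : {vspace V}) c : lker f == 0%VS -> c != 0 ->
  (forall v, v \in U -> f v = c *: v) -> forall v, v \in U -> (f^-1)%VF v = c^-1 *: v.
Proof.
move=> kf c0 Hf v Hv; have /lker0P inj := kf; apply: inj.
by rewrite lker0_lfunVK // Hf ?memvZ // scalerA mulfV // scale1r.
Qed.

Lemma phi_nz i : (1 <= i <= d)%N -> phi i != 0.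
Proof.
move=> Hi; apply/eqP => p0; case: hdec => hd _ _.
have : \dim (Vs i) = 1%N by apply: hd; case/andP: Hi.
suff -> : Vs i = 0%VS by rewrite dimv0.
apply/eqP; rewrite -subv0; apply/subvP => v Hv; rewrite memv0.
have Hi' : (i.-1 < d)%N by case/andP: Hi; case: i {Hv p0}.
move: Hv; rewrite -[i in Vs i](prednK (n:=i)); last by case/andP: Hi.
rewrite -(hrai.1 _ Hi') => /memv_imgP [x Hx ->].
move: Hx; rewrite -(hlow.1 _ Hi) => /memv_imgP [y Hy ->].
by rewrite (hphi _ Hi) // p0 scale0r.
Qed.

Fixpoint pw (f : 'End(V)) k : 'End(V) := if k is k'.+1 then (f \o pw f k')%VF else \1%VF.

Lemma pw0 f x : pw f 0 x = x. Proof. by rewrite /= id_lfunE. Qed.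
Lemma pwS' f k x : pw f k.+1 x = f (pw f k x). Proof. by rewrite /= comp_lfunE. Qed.
Lemma pwS f k x : pw f k.+1 x = pw f k (f x).
Proof. elim: k x => [|k IH] x; first by rewrite pwS' !pw0. by rewrite pwS' IH -pwS'. Qed.

Lemma pwB k i v : (i + k <= d)%N -> v \in Vs i -> pw B k v \in Vs (i + k).
Proof.
elim: k => [|k IH] Hk Hv; first by rewrite pw0 addn0.
rewrite pwS' addnS -(hrai.1 (i + k)%N) ?memv_img //; last by lia.
by apply: IH => //; lia.
Qed.

Lemma pwA k i v : (k <= i <= d)%N -> v \in Vs i -> pw A k v \in Vs (i - k).
Proof.
elim: k => [|k IH] Hk Hv; first by rewrite pw0 subn0.
have -> : (i - k.+1)%N = (i - k)%N.-1 by lia.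
rewrite pwS' -(hlow.1 (i - k)%N) ?memv_img //; last by lia.
by apply: IH => //; lia.
Qed.

Lemma Bd0 v : v \in Vs d -> B v = 0.
Proof. by move=> Hv; apply/eqP; rewrite -memv0 -hrai.2 memv_img. Qed.
Lemma A00 v : v \in Vs 0 -> A v = 0.
Proof. by move=> Hv; apply/eqP; rewrite -memv0 -hlow.2 memv_img. Qed.

Lemma AB j x : (j < d)%N -> x \in Vs j -> A (B x) = phi j.+1 *: x.
Proof.
move=> Hj Hx; have Hj' : (1 <= j.+1 <= d)%N by lia.
move: Hx; rewrite -[j]/(j.+1.-1) -(hlow.1 _ Hj') => /memv_imgP [y Hy ->].
by rewrite (hphi _ Hj') // linearZ.
Qed.

Lemma BApw k j : (k <= j <= d)%N ->
  exists2 c : F, c != 0 & forall y, y \in Vs j -> pw B k (pw A k y) = c *: y.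
Proof.
elim: k j => [|k IH] j Hk.
  by exists 1; rewrite ?oner_eq0 // => y _; rewrite !pw0 scale1r.
have Hj : (1 <= j <= d)%N by lia.
have [c c0 Hc] := IH j.-1 ltac:(lia).
exists (c * phi j); first by rewrite mulf_neq0 // phi_nz.
move=> y Hy; have HAy : A y \in Vs j.-1 by rewrite -(hlow.1 _ Hj) memv_img.
by rewrite pwS' pwS Hc // linearZ /= (hphi _ Hj) // scalerA.
Qed.

Lemma ABpw k j : (j + k <= d)%N ->
  exists2 c : F, c != 0 & forall x, x \in Vs j -> pw A k (pw B k x) = c *: x.
Proof.
elim: k j => [|k IH] j Hk.
  by exists 1; rewrite ?oner_eq0 // => y _; rewrite !pw0 scale1r.
have Hj : (j < d)%N by lia.
have [c c0 Hc] := IH j.+1 ltac:(lia).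
exists (c * phi j.+1); first by rewrite mulf_neq0 // phi_nz //; lia.
move=> x Hx; have HBx : B x \in Vs j.+1 by rewrite -(hrai.1 _ Hj) memv_img.
by rewrite pwS' pwS Hc // linearZ /= (AB _ _ Hj) // scalerA.
Qed.

Variable E : nat -> 'End(V).
Hypothesis hE : forall i, (i <= d)%N -> is_projection d Vs i (E i).

Lemma sumE (h : nat -> V -> V) j v : (forall i, h i 0 = 0) -> (j <= d)%N -> v \in Vs j ->
  \sum_(i < d.+1) h i (E i v) = h j v.
Proof.
move=> h0 Hj Hv; have Hj' : (j < d.+1)%N by [].
rewrite (bigD1 (Ordinal Hj')) //= big1 ?addr0.
  by have [H1 _] := hE _ Hj; rewrite H1.
move=> i ne; have [_ H2] := hE _ (ltn_ord i).
rewrite (H2 j) //; apply/negP => /eqP ei; move: ne.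
by apply/negP; rewrite negbK; apply/eqP/val_inj.
Qed.

Definition t i := (\prod_(1 <= k < i.+1) phi k) / (\prod_(1 <= k < i.+1) phi (d.+1 - k)%N).

Lemma t_nz i : (i <= d)%N -> t i != 0.
Proof.
move=> Hi; rewrite /t mulf_neq0 ?invr_neq0 // prodf_seq_neq0; apply/allP => k;
  rewrite mem_index_iota => Hk; apply/implyP => _; apply: phi_nz; lia.
Qed.

Lemma t_rec i : (i < d)%N -> t i.+1 = t i * phi i.+1 / phi (d - i)%N.
Proof.
move=> Hi; rewrite /t !(big_nat_recr i.+1) //=.
have h1 : phi (d - i)%N != 0 by apply: phi_nz; lia.
have h2 : \prod_(1 <= k < i.+1) phi (d.+1 - k)%N != 0.
  rewrite prodf_seq_neq0; apply/allP => k;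
  rewrite mem_index_iota => Hk; apply/implyP => _; apply: phi_nz; lia.
by field; rewrite h1 h2.
Qed.

Definition PsiD : 'End(V) := \sum_(i < d.+1) t i *: E i.

Lemma PsiE j v : (j <= d)%N -> v \in Vs j -> PsiD v = t j *: v.
Proof.
move=> Hj Hv; rewrite /PsiD sum_lfunE.
under eq_bigr do rewrite scale_lfunE.
by apply: (sumE (fun i x => t i *: x)) => // i; rewrite scaler0.
Qed.

Lemma Psi_ker : lker PsiD == 0%VS.
Proof. by apply/inj_lker/scalar_inj => i Hi; exists (t i); [exact: t_nz | move=> v; exact: PsiE]. Qed.

Lemma PsiVE j v : (j <= d)%N -> v \in Vs j -> (PsiD^-1)%VF v = (t j)^-1 *: v.
Proof. move=> Hj; apply: scal_inv; [exact: Psi_ker | exact: t_nz | move=> w; exact: PsiE]. Qed.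

Definition sigma : 'End(V) := \sum_(i < d.+1) (pw B (d - i) \o pw A i \o E i)%VF.

Lemma sigmaE j v : (j <= d)%N -> v \in Vs j -> sigma v = pw B (d - j) (pw A j v).
Proof.
move=> Hj Hv; rewrite /sigma sum_lfunE.
under eq_bigr do rewrite !comp_lfunE.
by apply: (sumE (fun i x => pw B (d - i) (pw A i x))) => // i; rewrite !linear0.
Qed.


Lemma sigmaA : (sigma \o A = B \o sigma)%VF.
Proof.
apply: lfun_eq_on => j Hj v Hv; rewrite !comp_lfunE.
case: j Hj Hv => [|k] Hj Hv.
  rewrite A00 // linear0 (sigmaE _ _ Hj Hv) pw0 subn0 Bd0 //.
  by have := pwB d 0 v (leqnn _) Hv.
have Hk : (1 <= k.+1 <= d)%N by lia.
have HAv : A v \in Vs k by rewrite -[k]/(k.+1.-1) -(hlow.1 _ Hk) memv_img.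
rewrite (sigmaE _ _ (ltnW Hj) HAv) (sigmaE _ _ Hj Hv) -pwS -(subnSK Hj) pwS'.
done.
Qed.

Lemma sigmaB : (sigma \o (PsiD^-1 \o B \o PsiD) = A \o sigma)%VF.
Proof.
apply: lfun_eq_on => j Hj v Hv; rewrite !comp_lfunE.
rewrite (PsiE _ _ Hj Hv) linearZ /=.
have [ejd | njd] := eqVneq j d.
  subst j; rewrite Bd0 // !linear0 (sigmaE _ _ Hj Hv) subnn pw0 A00 //.
  by have := pwA d d v (_ : (d <= d <= d)%N) Hv; rewrite subnn; apply; lia; rewrite subnn.
have Hjd : (j < d)%N by rewrite ltn_neqAle njd.
have HBv : B v \in Vs j.+1 by rewrite -(hrai.1 _ Hjd) memv_img.
rewrite linearZ /= (PsiVE _ _ Hjd HBv) !linearZ /= (sigmaE _ _ Hjd HBv).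
rewrite pwS (AB _ _ Hjd) // !linearZ /=.
rewrite (sigmaE _ _ (ltnW Hjd) Hv) -(subnSK Hjd) pwS'.
have Hw : pw A j v \in Vs 0.
  by have := pwA j j v (_ : (j <= j <= d)%N) Hv; rewrite subnn; apply; lia.
have Hw2 := pwB (d - j.+1)%N 0 _ (_ : (0 + (d - j.+1) <= d)%N) Hw.
rewrite (AB _ _ _ (Hw2 _)); [|lia|lia].
rewrite add0n subnSK // !scalerA; congr (_ *: _).
rewrite t_rec //.
have h1 : phi (d - j)%N != 0 by apply: phi_nz; lia.
have h2 : phi j.+1 != 0 by apply: phi_nz; lia.
have h3 := t_nz _ (ltnW Hjd).
by field; rewrite h1 h2 h3.
Qed.

Lemma sigma_ker : lker sigma == 0%VS.
Proof.
apply: inj_lker => v sv0.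
apply: (scalar_inj (sigma \o sigma)%VF); last by rewrite comp_lfunE sv0 linear0.
move=> j Hj.
have [c1 c1n Hc1] := ABpw (d - j) 0 ltac:(lia).
have [c2 c2n Hc2] := BApw j j ltac:(lia).
exists (c1 * c2); first by rewrite mulf_neq0.
move=> w Hw; rewrite comp_lfunE (sigmaE _ _ Hj Hw).
have Hw0 : pw A j w \in Vs 0.
  by have := pwA j j w (_ : (j <= j <= d)%N) Hw; rewrite subnn; apply; lia.
have Hw1 : pw B (d - j) (pw A j w) \in Vs (d - j).
  by have := pwB (d - j) 0 _ (_ : (0 + (d - j) <= d)%N) Hw0; rewrite add0n; apply; lia.
rewrite (sigmaE _ _ (leq_subr _ _) Hw1) Hc1 // linearZ /= subKn // Hc2 // scalerA.
by rewrite mulrC.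
Qed.


Lemma main_sec :
  [/\ invertible PsiD, LR_pair d A (PsiD^-1 \o B \o PsiD)%VF, LR_pair d (PsiD \o A \o PsiD^-1)%VF B
   & [/\ LR_iso A (PsiD^-1 \o B \o PsiD)%VF B A, LR_iso B A (PsiD \o A \o PsiD^-1)%VF B
     & LR_iso A (PsiD^-1 \o B \o PsiD)%VF (PsiD \o A \o PsiD^-1)%VF B]].
Proof.
have PK := lker0_lfunK Psi_ker.
have PVK := lker0_lfunVK Psi_ker.
have sK := lker0_lfunK sigma_ker.
have sVK := lker0_lfunVK sigma_ker.
have PsiI : forall i, (i <= d)%N -> (PsiD @: Vs i)%VS = Vs i.
  by move=> i Hi; apply: (scal_img _ _ _ (t_nz _ Hi)) => w; exact: PsiE.
have PsiVI : forall i, (i <= d)%N -> ((PsiD^-1)%VF @: Vs i)%VS = Vs i.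
  move=> i Hi; apply: (scal_img _ _ _ (invr_neq0 (t_nz _ Hi))) => w; exact: PsiVE.
split.
- exact: inv_of_lker Psi_ker.
- exists Vs; split => //; split.
    by move=> i Hi; rewrite !limg_comp PsiI ?(ltnW Hi) // (hrai.1 _ Hi) PsiVI.
  by rewrite !limg_comp PsiI // hrai.2 limg0.
- exists Vs; split => //; split.
    move=> i Hi; rewrite !limg_comp PsiVI ?(hlow.1 _ Hi) ?PsiI //; first by lia.
    by case/andP: Hi.
  by rewrite !limg_comp PsiVI // hlow.2 limg0.
have sA := sigmaA; have sB := sigmaB.
split.
- exists sigma; split => //; exact: inv_of_lker sigma_ker.
- exists (PsiD \o sigma^-1)%VF; split.
  + exists (sigma \o PsiD^-1)%VF; split; apply/lfunP => x; rewrite !comp_lfunE ?id_lfunE.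
      by rewrite PK sVK.
    by rewrite sK PVK.
  + apply/lfunP => x; rewrite !comp_lfunE PK.
    congr (PsiD _); have /lker0P inj := sigma_ker; apply: inj; rewrite sVK.
    have := congr1 (fun f : 'End(V) => f ((sigma^-1)%VF x)) sA.
    by rewrite /= !comp_lfunE sVK => ->.
  + apply/lfunP => x; rewrite !comp_lfunE.
    have := congr1 (fun f : 'End(V) => f ((sigma^-1)%VF x)) sB.
    rewrite /= !comp_lfunE sVK => <-.
    by rewrite sK PVK.
- exists PsiD; split.
  + exact: inv_of_lker Psi_ker.
  + by apply/lfunP => x; rewrite !comp_lfunE PK.
  + by apply/lfunP => x; rewrite !comp_lfunE PVK.
Qed.

End H.

Theorem proposition7p19 (F : fieldType) (V : vectType F) (d : nat)
  (hdim : \dim (fullv : {vspace V}) = d.+1)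
  (A B : 'End(V)) (Vs : nat -> {vspace V})
  (hdec : decomposition d Vs) (hlow : lowers d A Vs) (hrai : raises d B Vs)
  (phi : nat -> F)
  (hphi : forall i, (1 <= i <= d)%N -> forall v, v \in Vs i -> B (A v) = phi i *: v)
  (E : nat -> 'End(V))
  (hE : forall i, (i <= d)%N -> is_projection d Vs i (E i)) :
  let Psi : 'End(V) :=
    \sum_(i < d.+1)
       ((\prod_(1 <= k < i.+1) phi k) / (\prod_(1 <= k < i.+1) phi (d.+1 - k)%N)) *: E i in
  let Psi_inv : 'End(V) := (Psi^-1)%VF in
  [/\ invertible Psi,
      LR_pair d A (Psi_inv \o B \o Psi)%VF,
      LR_pair d (Psi \o A \o Psi_inv)%VF B
    & [/\ LR_iso A (Psi_inv \o B \o Psi)%VF B A,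
      LR_iso B A (Psi \o A \o Psi_inv)%VF B
    & LR_iso A (Psi_inv \o B \o Psi)%VF (Psi \o A \o Psi_inv)%VF B]].
Proof.
move=> Psi Psi_inv.
have eP : Psi = PsiD F V d phi E.
  rewrite /PsiD /t; reflexivity.
rewrite /Psi_inv eP.
exact: (@main_sec F V d A B Vs hdec hlow hrai phi hphi E hE).
Qed.
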